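(* Let $R$ be a commutative noetherian ring and $A=R[T]$. Let $I\subseteq A$ be a locally complete intersection ideal of height $r$ such that $T$ is a nonzerodivisor on $A/I$. Then the commutative square of natural maps $$\begin{array}{ccc} I/TI^2 & \to & I/TI\\ \downarrow && \downarrow\\ I/I^2 & \to & I/(I^2+TI)\end{array}$$ is Cartesian. Moreover, with $I(0)\subseteq R$ the image of $I$ under $T\mapsto0$, the natural maps give isomorphisms $I/TI\cong I(0)$ and $I/(I^2+TI)\cong I(0)/I(0)^2$.
   Context: ''$I$ is a locally complete intersection ideal'' is used in the sense that $I$ is locally generated by a regular sequence, so that $I/I^2$ is a projective $A/I$-module. *)

(* Defs.v *)
From mathcomp Require Import all_boot all_algebra.
Set Implicit Arguments. Unset Strict Implicit. Unset Printing Implicit Defensive.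
Import GRing.Theory.
Local Open Scope ring_scope.

Section Defs.
Variable R : comRingType.

Definition is_ideal (J : R -> Prop) : Prop :=
  [/\ J 0, (forall x y, J x -> J y -> J (x + y)) & (forall a x, J x -> J (a * x))].

Definition is_prime (P : R -> Prop) : Prop :=
  [/\ is_ideal P, ~ P 1 & (forall a b, P (a * b) -> P a \/ P b)].

Definition subset (J K : R -> Prop) : Prop := forall x, J x -> K x.

Definition ideal_gen (n : nat) (f : 'I_n -> R) (k : nat) (x : R) : Prop :=
  exists c : 'I_n -> R, x = \sum_(i < n | (i < k)%N) c i * f i.

Definition noetherian : Prop :=
  forall J, is_ideal J -> exists n (f : 'I_n -> R), forall x, J x <-> ideal_gen f n x.

Definition prime_chain (n : nat) (Q : nat -> R -> Prop) : Prop :=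
  (forall i, (i <= n)%N -> is_prime (Q i)) /\
  (forall i, (i < n)%N -> subset (Q i) (Q i.+1) /\ exists x, Q i.+1 x /\ ~ Q i x).

Definition height_ge (P : R -> Prop) (n : nat) : Prop :=
  exists Q, prime_chain n Q /\ forall x, Q n x <-> P x.

Definition ideal_height_eq (J : R -> Prop) (r : nat) : Prop :=
  (forall P, is_prime P -> subset J P -> height_ge P r) /\
  (exists P, [/\ is_prime P, subset J P & ~ height_ge P r.+1]).

(* locally complete intersection: for each prime P ⊇ J, J_P is generated by
   a regular sequence f_1..f_n of A_P with f_i ∈ J (expressed without
   localization: "exists t ∉ P" encodes equalities in A_P). *)
Definition lci (J : R -> Prop) : Prop :=
  forall P, is_prime P -> subset J P ->
    exists n (f : 'I_n -> R),
      [/\ forall i, J (f i),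
          (forall x, J x -> exists t, ~ P t /\ ideal_gen f n (t * x)) &
          (forall (i : 'I_n) a, ideal_gen f i (f i * a) ->
              exists t, ~ P t /\ ideal_gen f i (t * a))].

Definition ideal_mul (J K : R -> Prop) : R -> Prop :=
  fun x => exists n (a b : 'I_n -> R),
    [/\ forall i, J (a i), forall i, K (b i) & x = \sum_i a i * b i].

Definition ideal_add (J K : R -> Prop) : R -> Prop :=
  fun x => exists u v, [/\ J u, K v & x = u + v].

Definition scale_set (t : R) (J : R -> Prop) : R -> Prop :=
  fun x => exists y, J y /\ x = t * y.

Definition coset (K : R -> Prop) (x : R) : R -> Prop := fun y => K (y - x).

Definition quotient_set (J K : R -> Prop) : (R -> Prop) -> Prop :=
  fun C => exists x, J x /\ C = coset K x.

End Defs.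

(* the map induced by f on classes: class C is sent to the class D
   iff f x ∈ D for some x ∈ C *)
Definition induced_rel (R S : Type) (f : R -> S) (C : R -> Prop) (D : S -> Prop) : Prop :=
  exists x, C x /\ D (f x).

Definition induced_bij (R S : Type) (Q1 : (R -> Prop) -> Prop) (Q2 : (S -> Prop) -> Prop)
  (f : R -> S) : Prop :=
  (forall C, Q1 C -> exists! D, Q2 D /\ induced_rel f C D) /\
  (forall D, Q2 D -> exists! C, Q1 C /\ induced_rel f C D).

Definition ideal_at0 (R : comRingType) (J : {poly R} -> Prop) : R -> Prop :=
  fun y => exists p, J p /\ y = p.[0].

(* Main.v *)
Require Import Defs.
From mathcomp Require Import all_boot all_algebra.
From mathcomp Require Import ring.
From mathcomp Require Import boolp.
From mathcomp Require classical_sets.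
From Stdlib Require Import Classical_Prop.
Set Implicit Arguments. Unset Strict Implicit. Unset Printing Implicit Defensive.
Import GRing.Theory.
Local Open Scope ring_scope.

Section Gen.
Variable A : comRingType.
Implicit Types (J K P : A -> Prop).

Lemma idealN J x : is_ideal J -> J x -> J (- x).
Proof. by case=> _ _ HM Jx; rewrite -mulN1r; apply: HM. Qed.

Lemma idealD J x y : is_ideal J -> J x -> J y -> J (x + y).
Proof. by case=> _ HD _; apply: HD. Qed.

Lemma idealM J a x : is_ideal J -> J x -> J (a * x).
Proof. by case=> _ _ HM; apply: HM. Qed.

Lemma ideal0 J : is_ideal J -> J 0.
Proof. by case. Qed.

Lemma idealB J x y : is_ideal J -> J x -> J y -> J (x - y).
Proof. by move=> HJ Jx Jy; apply: idealD => //; apply: idealN. Qed.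

Lemma idealMr J a x : is_ideal J -> J x -> J (x * a).
Proof. by move=> HJ Jx; rewrite mulrC; apply: idealM. Qed.

Lemma ideal_sum J (I : finType) (P : pred I) (F : I -> A) : is_ideal J ->
  (forall i, J (F i)) -> J (\sum_(i | P i) F i).
Proof. move=> HJ HF; apply: (big_ind J); [exact: (ideal0 HJ)|move=> x y; exact: idealD|by []]. Qed.

Lemma coset_eq J x y : is_ideal J -> J (x - y) -> coset J x = coset J y.
Proof.
move=> HJ Jxy; apply: funext => z; apply: propext; rewrite /coset; split => H.
- have -> : z - y = (z - x) + (x - y) by rewrite addrA subrK.
  exact: idealD.
- have -> : z - x = (z - y) - (x - y) by rewrite opprB addrA subrK.
  exact: idealB.
Qed.

Lemma ideal_mul_ideal J K : is_ideal J -> is_ideal K -> is_ideal (ideal_mul J K).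
Proof.
move=> HJ HK; split.
- exists 0%N, (fun _ => 0), (fun _ => 0); split; [by case|by case|by rewrite big_ord0].
- move=> x y [n [a [b [Ha Hb ->]]]] [m [a' [b' [Ha' Hb' ->]]]].
  exists (n + m)%N, (fun i => match split i with inl j => a j | inr k => a' k end),
    (fun i => match split i with inl j => b j | inr k => b' k end); split.
  + by move=> i; case: (split i).
  + by move=> i; case: (split i).
  + rewrite big_split_ord /=; congr (_ + _); apply: eq_bigr => i _.
    * by have -> : split (lshift m i) = inl i := unsplitK (inl _ i).
    * by have -> : split (rshift n i) = inr i := unsplitK (inr _ i).
- move=> c x [n [a [b [Ha Hb ->]]]]; exists n, (fun i => c * a i), b; split => //.
  + by move=> i; apply: idealM.
  + by rewrite mulr_sumr; apply: eq_bigr => i _; rewrite mulrA.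
Qed.

Lemma ideal_add_ideal J K : is_ideal J -> is_ideal K -> is_ideal (ideal_add J K).
Proof.
move=> HJ HK; split.
- by exists 0, 0; split; rewrite ?addr0 //; apply: ideal0.
- move=> x y [u [v [Hu Hv ->]]] [u' [v' [Hu' Hv' ->]]]; exists (u + u'), (v + v').
  by split; [apply: idealD|apply: idealD|rewrite addrACA].
- move=> c x [u [v [Hu Hv ->]]]; exists (c * u), (c * v).
  by split; [apply: idealM|apply: idealM|rewrite mulrDr].
Qed.

Lemma scale_ideal J t : is_ideal J -> is_ideal (scale_set t J).
Proof.
move=> HJ; split.
- by exists 0; split; rewrite ?mulr0 //; apply: ideal0.
- move=> x y [u [Hu ->]] [v [Hv ->]]; exists (u + v).
  by split; [apply: idealD|rewrite mulrDr].
- move=> c x [u [Hu ->]]; exists (c * u).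
  by split; [apply: idealM|rewrite mulrCA].
Qed.

Lemma ideal_mul_sub J : is_ideal J -> forall x, ideal_mul J J x -> J x.
Proof.
move=> HJ x [n [a [b [Ha Hb ->]]]]; apply: (ideal_sum _ HJ) => i; exact: (idealM _ HJ (Hb i)).
Qed.

Lemma primeM P a b : is_prime P -> ~ P a -> ~ P b -> ~ P (a * b).
Proof. by case=> _ _ H na nb /H [] . Qed.

Lemma prime1 P : is_prime P -> ~ P 1.
Proof. by case. Qed.

Lemma prime_prod P (I : finType) (F : I -> A) : is_prime P ->
  (forall i, ~ P (F i)) -> ~ P (\prod_i F i).
Proof.
move=> HP HF; apply: (big_ind (fun x => ~ P x)) => //; first exact: prime1.
by move=> x y; apply: primeM.
Qed.


Lemma krull K : is_ideal K -> ~ K 1 -> exists P, is_prime P /\ Defs.subset K P.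
Proof.
move=> HK nK1.
pose Pr := fun J : A -> Prop => [/\ ~ J 1, (forall x y, J x -> J y -> J (x + y)),
   (forall a x, J x -> J (a * x)) & (forall x, J x -> forall y, K y -> J y)].
have PK : Pr K by case: HK => K0 KD KM; split.
have [M [[nM1 MD MM MK] Mmax]] : exists M, Pr M /\
    (forall B, classical_sets.proper M B -> ~ Pr B).
  apply: classical_sets.Zorn_bigcup => F FP Ftot; split.
  - by case=> J FJ J1; case: (FP J FJ) => /(_ J1).
  - move=> x y [J FJ Jx] [J' FJ' J'y].
    case: (Ftot J J' FJ FJ') => sub.
    + exists J' => //; case: (FP J' FJ') => _ D _ _; apply: D => //; exact: sub.
    + exists J => //; case: (FP J FJ) => _ D _ _; apply: D => //; exact: sub.
  - move=> a x [J FJ Jx]; exists J => //; case: (FP J FJ) => _ _ Mu _; exact: Mu.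
  - move=> x [J FJ Jx] y Ky; exists J => //; case: (FP J FJ) => _ _ _ S; exact: S Jx y Ky.
have [x0 Mx0] : exists x, M x.
  apply: NNPP => nE; apply: (Mmax K) => //; split.
  - by move=> x Mx; case: nE; exists x.
  - by move=> sub; apply: nE; exists 0; apply: sub; exact: ideal0.
have KM : forall y, K y -> M y by exact: MK Mx0.
have M0 : M 0 by apply: KM; exact: ideal0.
exists M; split => //; split => //.
move=> a b Mab; apply: NNPP => /not_or_and [na nb].
have gen1 : forall c, ~ M c -> exists y d, M y /\ 1 = y + d * c.
  move=> c nc; apply: NNPP => nE.
  pose B := fun x => exists y d, M y /\ x = y + d * c.
  apply: (Mmax B).
  - split.
    + by move=> x Mx; exists x, 0; rewrite mul0r addr0.
    + by move=> sub; apply: nc; apply: sub; exists 0, 1; rewrite mul1r add0r.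
  - split.
    + by case=> y [d [My E]]; apply: nE; exists y, d.
    + move=> x y [y1 [d1 [M1 ->]]] [y2 [d2 [M2 ->]]]; exists (y1 + y2), (d1 + d2).
      by split; [apply: (MD)|rewrite mulrDl addrACA].
    + move=> e x [y1 [d1 [M1 ->]]]; exists (e * y1), (e * d1).
      by split; [apply: (MM)|rewrite mulrDr mulrA].
    + by move=> x _ y Ky; exists y, 0; rewrite mul0r addr0; split => //; apply: KM.
have [y1 [d1 [M1 E1]]] := gen1 a na.
have [y2 [d2 [M2 E2]]] := gen1 b nb.
apply: nM1.
have -> : 1 = y1 * (y2 + d2 * b) + (d1 * a) * y2 + (d1 * d2) * (a * b) :> A.
  transitivity ((y1 + d1 * a) * (y2 + d2 * b)); first by rewrite -E1 -E2 mulr1.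
  ring.
apply: (MD); first apply: (MD).
- by rewrite mulrC; apply: (MM).
- by apply: (MM).
- by apply: (MM).
Qed.

Lemma gen_ideal n (f : 'I_n -> A) k : is_ideal (ideal_gen f k).
Proof.
split.
- by exists (fun=> 0); rewrite big1 // => i _; rewrite mul0r.
- move=> x y [c ->] [c' ->]; exists (fun i => c i + c' i).
  by rewrite -big_split; apply: eq_bigr => i _; rewrite mulrDl.
- move=> a x [c ->]; exists (fun i => a * c i).
  by rewrite mulr_sumr; apply: eq_bigr => i _; rewrite mulrA.
Qed.

Lemma gen_f n (f : 'I_n -> A) k (i : 'I_n) : (i < k)%N -> ideal_gen f k (f i).
Proof.
move=> ik; exists (fun j => (j == i)%:R).
rewrite (bigD1 i) //= eqxx mul1r big1 ?addr0 // => j /andP[_ /negbTE ->].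
by rewrite mul0r.
Qed.

Lemma gen_mono n (f : 'I_n -> A) k k' x : (k <= k')%N ->
  ideal_gen f k x -> ideal_gen f k' x.
Proof.
move=> kk [c ->]; exists (fun i : 'I_n => if (i < k)%N then c i else 0).
rewrite big_mkcond [RHS]big_mkcond; apply: eq_bigr => i _.
case: ifP => ik; first by rewrite (leq_trans ik kk).
by case: ifP => //; rewrite mul0r.
Qed.

Lemma gen_sub J n (f : 'I_n -> A) k x : is_ideal J -> (forall i, J (f i)) ->
  ideal_gen f k x -> J x.
Proof.
move=> HJ Hf [c ->]; apply: (ideal_sum _ HJ) => i; exact: (idealM _ HJ (Hf i)).
Qed.

End Gen.
Section Key.
Variable A : comRingType.

Lemma koszul (P : A -> Prop) n (f : 'I_n -> A) :
  is_prime P ->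
  (forall (i : 'I_n) a, ideal_gen f i (f i * a) ->
      exists t, ~ P t /\ ideal_gen f i (t * a)) ->
  forall k, (k <= n)%N -> forall c : 'I_n -> A,
  \sum_(i < n | (i < k)%N) c i * f i = 0 ->
  forall i : 'I_n, (i < k)%N -> exists t, ~ P t /\ ideal_gen f k (t * c i).
Proof.
move=> HP reg; elim=> [|k IH] kn c Hc i ik; first by [].
pose j := Ordinal kn.
have Hs : \sum_(i < n | (i < k.+1)%N) c i * f i
    = \sum_(i < n | (i < k)%N) c i * f i + c j * f j.
  rewrite (bigD1 j) //= addrC; congr (_ + _); apply: eq_bigl => i'.
  rewrite ltnS ltn_neqAle andbC; congr (_ && _).
have H1 : ideal_gen f j (f j * c j).
  exists (fun i => - c i).
  rewrite mulrC; move: Hc; rewrite Hs addrC => /eqP; rewrite addr_eq0 => /eqP ->.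
  by rewrite -sumrN; apply: eq_bigr => i' _; rewrite mulNr.
have [t [nPt [h Hh]]] := reg j (c j) H1.
pose c' := fun i => t * c i + h i * f j.
have Hc' : \sum_(i < n | (i < k)%N) c' i * f i = 0.
  have -> : \sum_(i < n | (i < k)%N) c' i * f i
     = t * \sum_(i < n | (i < k)%N) c i * f i + f j * \sum_(i < n | (i < k)%N) h i * f i.
    rewrite !mulr_sumr -big_split; apply: eq_bigr => i' _; rewrite /c' /=; ring.
  rewrite -Hh.
  have -> : t * \sum_(i < n | (i < k)%N) c i * f i + f j * (t * c j)
     = t * (\sum_(i < n | (i < k)%N) c i * f i + c j * f j) by ring.
  by rewrite -Hs Hc mulr0.
have gk : is_ideal (ideal_gen f k.+1) by exact: gen_ideal.
case: (boolP (i == j)) => [/eqP -> | nij].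
  exists t; split => //; apply: (gen_mono (leqnSn k)); exists h; exact: Hh.
have ik' : (i < k)%N.
  move: ik; rewrite ltnS leq_eqVlt => /orP [/eqP eik|//].
  by case/negP: nij; apply/eqP/val_inj.
have [t' [nPt' Ht']] := IH (ltnW kn) c' Hc' i ik'.
exists (t' * t); split; first exact: primeM.
have -> : t' * t * c i = t' * c' i - (t' * h i) * f j by rewrite /c' /=; ring.
apply: idealB => //; first exact: gen_mono (leqnSn k) Ht'.
by apply: idealM => //; apply: gen_f.
Qed.

Lemma sum_ltn n (F : 'I_n -> A) : \sum_(i < n | (i < n)%N) F i = \sum_i F i.
Proof. by apply: eq_bigl => i; rewrite ltn_ord. Qed.

Lemma key (I : A -> Prop) (T : A) : is_ideal I -> lci I ->
  (forall p, I (T * p) -> I p) ->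
  forall b, I b -> ideal_mul I I (T * b) -> ideal_mul I I b.
Proof.
move=> HI Hlci HT b Ib HTb.
have HI2 : is_ideal (ideal_mul I I) by exact: ideal_mul_ideal.
pose K := fun s => ideal_mul I I (s * b).
have HK : is_ideal K.
  split.
  - by rewrite /K mul0r; exact: ideal0.
  - by move=> x y Kx Ky; rewrite /K mulrDl; apply: idealD.
  - by move=> a x Kx; rewrite /K -mulrA; apply: idealM.
suff : K 1 by rewrite /K mul1r.
apply: NNPP => nK1.
have [P [HP sKP]] := krull HK nK1.
suff [s [Ks nPs]] : exists s, K s /\ ~ P s by apply: nPs; apply: sKP.
case: (pselect (Defs.subset I P)) => sIP; last first.
  have [s [Is nPs]] : exists s, I s /\ ~ P s.
    apply: NNPP => nE; apply: sIP => x Ix; apply: NNPP => nPx; apply: nE.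
    by exists x.
  exists s; split => //; exists 1%N, (fun=> s), (fun=> b).
  by split => //; rewrite big_ord1.
have [n [f [fI gen reg]]] := Hlci P HP sIP.
have [t0 [nPt0 [c Hc]]] := gen b Ib.
have L1 : forall x, ideal_mul I I x -> exists u, ~ P u /\ exists g : 'I_n -> A,
    (forall i, I (g i)) /\ u * x = \sum_(i < n | (i < n)%N) g i * f i.
  move=> x [m [a [a' [Ha Ha' ->]]]].
  apply: (big_ind (fun x => exists u, ~ P u /\ exists g : 'I_n -> A,
    (forall i, I (g i)) /\ u * x = \sum_(i < n | (i < n)%N) g i * f i)).
  - exists 1; split; first exact: prime1.
    exists (fun=> 0); split; first by move=> _; exact: ideal0.
    by rewrite mulr0 big1 // => i _; rewrite mul0r.
  - move=> x1 y1 [u1 [nP1 [g1 [Hg1 E1]]]] [u2 [nP2 [g2 [Hg2 E2]]]].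
    exists (u1 * u2); split; first exact: primeM.
    exists (fun i => u2 * g1 i + u1 * g2 i); split.
      by move=> i; apply: idealD => //; apply: idealM.
    have -> : u1 * u2 * (x1 + y1) = u2 * (u1 * x1) + u1 * (u2 * y1) by ring.
    rewrite E1 E2 !mulr_sumr -big_split; apply: eq_bigr => i _ /=; ring.
  - move=> j _.
    have [t [nPt [d Hd]]] := gen (a j) (Ha j).
    exists t; split => //; exists (fun i => d i * a' j); split.
      by move=> i; apply: idealM.
    rewrite mulrA Hd mulr_suml; apply: eq_bigr => i _ /=; ring.
have [u [nPu [g [Ig Eg]]]] := L1 _ HTb.
have Hrel : \sum_(i < n | (i < n)%N) (u * T * c i - t0 * g i) * f i = 0.
  have -> : \sum_(i < n | (i < n)%N) (u * T * c i - t0 * g i) * f i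
     = u * T * \sum_(i < n | (i < n)%N) c i * f i
       - t0 * \sum_(i < n | (i < n)%N) g i * f i.
    rewrite !mulr_sumr -sumrB; apply: eq_bigr => i _ /=; ring.
  rewrite -Hc -Eg; ring.
have Hk := koszul HP reg (leqnn n) Hrel.
have Ht : forall i, exists t, ~ P t /\ I (t * u * c i).
  move=> i; have [t [nPt Ht]] := Hk i (ltn_ord i).
  exists t; split => //; apply: HT.
  have -> : T * (t * u * c i) = t * (u * T * c i - t0 * g i) + t * t0 * g i by ring.
  apply: idealD => //; last by apply: idealM.
  exact: gen_sub HI fI Ht.
have [tt Htt] := fin_all_exists Ht.
pose v := \prod_i tt i.
have nPv : ~ P v by apply: prime_prod => // i; case: (Htt i).
have Iv : forall i, I (v * u * c i).
  move=> i; rewrite /v (bigD1 i) //=.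
  set Q := \prod_(j | j != i) tt j.
  rewrite [_ * Q]mulrC -!mulrA; apply: idealM => //.
  by rewrite !mulrA; case: (Htt i).
exists (v * u * t0); split; last by apply: primeM => //; apply: primeM.
exists n, (fun i => v * u * c i), f; split => //.
rewrite -mulrA Hc sum_ltn mulr_sumr; apply: eq_bigr => i _ /=; ring.
Qed.

End Key.

Unset Implicit Arguments.

Theorem lemma2p13 (R : comRingType) (I : {poly R} -> Prop) (r : nat) :
  noetherian R ->
  is_ideal I ->
  lci I ->
  ideal_height_eq I r ->
  (forall p : {poly R}, I ('X * p) -> I p) ->
  let I2 := ideal_mul I I in
  let TI := scale_set 'X I in
  let TI2 := scale_set 'X I2 in
  let I2TI := ideal_add I2 TI in
  let I0 := ideal_at0 I in
  (* the square I/TI^2 -> I/I^2, I/TI -> I/(I^2+TI) is Cartesian *)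
  (forall C1 C2,
     quotient_set I I2 C1 -> quotient_set I TI C2 ->
     (exists D, [/\ quotient_set I I2TI D, induced_rel id C1 D & induced_rel id C2 D]) ->
     exists! C, [/\ quotient_set I TI2 C, induced_rel id C C1 & induced_rel id C C2])
  /\ induced_bij (quotient_set I TI) (quotient_set I0 (fun y => y = 0))
       (fun p : {poly R} => p.[0])
  /\ induced_bij (quotient_set I I2TI) (quotient_set I0 (ideal_mul I0 I0))
       (fun p : {poly R} => p.[0]).
Proof.
move=> noeth HI Hlci Hh HX I2 TI TI2 I2TI I0.
have HI2 : is_ideal I2 by exact: ideal_mul_ideal.
have HTI : is_ideal TI by exact: scale_ideal.
have HTI2 : is_ideal TI2 by exact: scale_ideal.
have HI2TI : is_ideal I2TI by exact: ideal_add_ideal.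
have HI0 : is_ideal I0.
  split.
  - by exists 0; split; [exact: ideal0 | rewrite horner0].
  - move=> x y [p [Ip ->]] [q [Iq ->]]; exists (p + q).
    by split; [exact: idealD|rewrite hornerD].
  - move=> a x [p [Ip ->]]; exists (a%:P * p).
    by split; [exact: idealM|rewrite hornerCM].
have HI02 : is_ideal (ideal_mul I0 I0) by exact: ideal_mul_ideal.
have sI2 : forall x, I2 x -> I x by exact: ideal_mul_sub.
have sTI2 : forall x, TI2 x -> TI x.
  by move=> x [y [Iy ->]]; exists y; split => //; exact: sI2.
have ev_TI : forall q, TI q -> q.[0] = 0.
  by move=> q [y [_ ->]]; rewrite hornerM hornerX mul0r.
have ev_I2 : forall q, I2 q -> ideal_mul I0 I0 q.[0].
  move=> q [m [a [b [Ha Hb ->]]]].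
  exists m, (fun i => (a i).[0]), (fun i => (b i).[0]); split.
  - by move=> i; exists (a i).
  - by move=> i; exists (b i).
  - by rewrite horner_sum; apply: eq_bigr => i _; rewrite hornerM.
have ev_I2TI : forall q, I2TI q -> ideal_mul I0 I0 q.[0].
  move=> q [u [v [Iu Tv ->]]]; rewrite hornerD (ev_TI _ Tv) addr0; exact: ev_I2.
have root0 : forall q, I q -> q.[0] = 0 -> TI q.
  move=> q Iq q0.
  have /factor_theorem [q' Eq] : root q 0 by apply/eqP.
  move: Eq; rewrite subr0 mulrC => Eq.
  by exists q'; split => //; apply: HX; rewrite -Eq.
have inc1 : forall x, I2 x -> I2TI x.
  by move=> x Ix; exists x, 0; split; [|exact: ideal0|rewrite addr0].
have inc2 : forall x, TI x -> I2TI x.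
  by move=> x Ix; exists 0, x; split; [exact: ideal0| |rewrite add0r].
have lift : forall w, I w -> ideal_mul I0 I0 w.[0] -> I2TI w.
  move=> w Iw [m [a [b [Ha Hb Ew]]]].
  have Ha' : forall i, exists p, I p /\ a i = p.[0] := Ha.
  have Hb' : forall i, exists p, I p /\ b i = p.[0] := Hb.
  have [P' HP'] := fin_all_exists Ha'.
  have [Q' HQ'] := fin_all_exists Hb'.
  pose u := \sum_i P' i * Q' i.
  have I2u : I2 u.
    exists m, P', Q'; split => //.
    - by move=> i; case: (HP' i).
    - by move=> i; case: (HQ' i).
  exists u, (w - u); split => //; last by rewrite addrC subrK.
  apply: root0; first by apply: idealB => //; exact: sI2.
  rewrite hornerD hornerN Ew /u horner_sum; apply/eqP; rewrite subr_eq0; apply/eqP.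
  apply: eq_bigr => i _.
  by rewrite hornerM; case: (HP' i) => _ <-; case: (HQ' i) => _ <-.
have keyI : forall d, I2 d -> TI d -> TI2 d.
  move=> d I2d [y [Iy Ed]]; exists y; split => //.
  by apply: (key HI Hlci HX) => //; rewrite -Ed.
split.
  move=> C1 C2 [x1 [Ix1 ->]] [x2 [Ix2 ->]] [D [[y [Iy ->]] [z1 [Hz1 Hz1']] [z2 [Hz2 Hz2']]]].
  rewrite /coset /= in Hz1 Hz1' Hz2 Hz2'.
  have Hd : I2TI (x1 - x2).
    have -> : x1 - x2 = - (z1 - x1) + (z1 - y) - (z2 - y) + (z2 - x2) by ring.
    apply: idealD => //; last exact: inc2.
    apply: idealB => //; apply: idealD => //.
    by apply: inc1; apply: idealN.
  case: Hd => u [v [Iu Tv Euv]].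
  have Ev : x1 - u - x2 = v.
    have -> : x1 - u - x2 = (u + v) - u by rewrite -Euv; ring.
    by rewrite addrC addKr.
  exists (coset TI2 (x1 - u)); split.
    split.
    - by exists (x1 - u); split => //; apply: idealB => //; exact: sI2.
    - exists (x1 - u); rewrite /coset /= subrr; split; first exact: ideal0.
      have -> : x1 - u - x1 = - u by ring.
      exact: idealN.
    - exists (x1 - u); rewrite /coset /= subrr Ev; split => //; exact: ideal0.
  move=> C' [[x' [Ix' ->]] [w1 [Hw1 Hw1']] [w2 [Hw2 Hw2']]].
  rewrite /coset /= in Hw1 Hw1' Hw2 Hw2'.
  apply: coset_eq => //; apply: keyI.
  - have -> : x1 - u - x' = (w1 - x') - (w1 - x1) - u by ring.
    apply: idealB => //; apply: idealB => //.
    by case: Hw1 => y' [Iy' ->]; apply: idealM.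
  - have -> : x1 - u - x' = (w2 - x') - (w2 - x2) + (x1 - u - x2) by ring.
    rewrite Ev; apply: idealD => //; apply: idealB => //; exact: sTI2.
split.
  split.
  - move=> C [x [Ix ->]]; exists (coset (fun y => y = 0) x.[0]); split.
      split; first by exists x.[0]; split => //; exists x.
      by exists x; split; rewrite /coset /= subrr //; exact: ideal0.
    move=> D [[y [Iy ->]] [z [Hz Hz']]].
    rewrite /coset /= in Hz Hz'.
    have -> // : y = x.[0].
    move: (ev_TI _ Hz); rewrite hornerD hornerN => /eqP; rewrite subr_eq0 => /eqP <-.
    by move/eqP: Hz'; rewrite subr_eq0 => /eqP.
  - move=> D [y [[p [Ip Ey]] ->]]; rewrite Ey; exists (coset TI p); split.
      split; first by exists p.
      by exists p; split; rewrite /coset /= subrr //; exact: ideal0.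
    move=> C' [[q [Iq ->]] [z [Hz Hz']]].
    rewrite /coset /= in Hz Hz'.
    apply: coset_eq => //; apply: root0; first by apply: idealB.
    move/eqP: Hz'; rewrite subr_eq0 => /eqP E1.
    move: (ev_TI _ Hz); rewrite hornerD hornerN => /eqP; rewrite subr_eq0 => /eqP E2.
    by rewrite hornerD hornerN -E1 E2 subrr.
split.
- move=> C [x [Ix ->]]; exists (coset (ideal_mul I0 I0) x.[0]); split.
    split; first by exists x.[0]; split => //; exists x.
    by exists x; split; rewrite /coset /= subrr //; exact: ideal0.
  move=> D [[y [Iy ->]] [z [Hz Hz']]].
  rewrite /coset /= in Hz Hz'.
  apply: coset_eq => //.
  have := ev_I2TI _ Hz; rewrite hornerD hornerN => H.
  have -> : x.[0] - y = (z.[0] - y) - (z.[0] - x.[0]) by ring.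
  exact: idealB.
- move=> D [y [[p [Ip Ey]] ->]]; rewrite Ey; exists (coset I2TI p); split.
    split; first by exists p.
    by exists p; split; rewrite /coset /= subrr //; exact: ideal0.
  move=> C' [[q [Iq ->]] [z [Hz Hz']]].
  rewrite /coset /= in Hz Hz'.
  apply: coset_eq => //; apply: lift; first by apply: idealB.
  rewrite hornerD hornerN.
  have := ev_I2TI _ Hz; rewrite hornerD hornerN => H.
  have -> : p.[0] - q.[0] = (z.[0] - q.[0]) - (z.[0] - p.[0]) by ring.
  exact: idealB.
Qed.
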